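(* Consider a mean-variance team stochastic game as described in the context. Let $\boldsymbol{\mu},\boldsymbol{\mu}'\in\mathcal{U}$ and define $\mathcal{L}_f^{\boldsymbol{\mu}}(\boldsymbol{\mu}')=\mathbb{E}_{s\sim\pi^{\boldsymbol{\mu}},\boldsymbol{a}\sim\boldsymbol{\mu}'(\cdot|s)}[A_f^{\boldsymbol{\mu}}(s,\boldsymbol{a})]$, $\mathcal{L}^{\boldsymbol{\mu}}(\boldsymbol{\mu}')=\mathbb{E}_{s\sim\pi^{\boldsymbol{\mu}},\boldsymbol{a}\sim\boldsymbol{\mu}'(\cdot|s)}[A^{\boldsymbol{\mu}}(s,\boldsymbol{a})]$, $\epsilon_f=\max_s|\mathbb{E}_{\boldsymbol{a}\sim\boldsymbol{\mu}'(\cdot|s)}[A_f^{\boldsymbol{\mu}}(s,\boldsymbol{a})]|$, $\epsilon_\eta=\max_s|\mathbb{E}_{\boldsymbol{a}\sim\boldsymbol{\mu}'(\cdot|s)}[A^{\boldsymbol{\mu}}(s,\boldsymbol{a})]|$, and $H=\max\big(0,\ \mathcal{L}^{\boldsymbol{\mu}}(\boldsymbol{\mu}')-2(\kappa^*-1)\epsilon_\eta D_{\mathrm{TV}}(\boldsymbol{\mu}',\boldsymbol{\mu}),\ -\mathcal{L}^{\boldsymbol{\mu}}(\boldsymbol{\mu}')-2(\kappa^*-1)\epsilon_\eta D_{\mathrm{TV}}(\boldsymbol{\mu}',\boldsymbol{\mu})\big)$. Then $$J(\boldsymbol{\mu}')-J(\boldsymbol{\mu})\ge\mathcal{L}_f^{\boldsymbol{\mu}}(\boldsymbol{\mu}')-2(\kappa^*-1)\epsilon_fD_{\mathrm{TV}}(\boldsymbol{\mu}',\boldsymbol{\mu})+\beta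 H^2 .$$
   Context: Game: finite agents $\mathcal{N}=\{1,\dots,N\}$, finite state space $\mathcal{S}$, finite action sets $\mathcal{A}_i$, $\mathcal{A}=\prod_i\mathcal{A}_i$, transition kernel $P(s'|s,\boldsymbol{a})$, common reward $r:\mathcal{S}\times\mathcal{A}\to\mathbb{R}$. Policies $\mu_i:\mathcal{S}\to\Delta(\mathcal{A}_i)$ (set $\mathcal{U}_i$); joint policies $\boldsymbol{\mu}\in\mathcal{U}=\prod_i\mathcal{U}_i$ with $\boldsymbol{\mu}(\boldsymbol{a}|s)=\prod_i\mu_i(a_i|s)$. Standing assumption: the chain $P^{\boldsymbol{\mu}}(s'|s)=\sum_{\boldsymbol{a}}\boldsymbol{\mu}(\boldsymbol{a}|s)P(s'|s,\boldsymbol{a})$ is ergodic for every $\boldsymbol{\mu}\in\mathcal{U}$, stationary distribution $\pi^{\boldsymbol{\mu}}$. $\eta^{\boldsymbol{\mu}}=\sum_s\pi^{\boldsymbol{\mu}}(s)\sum_{\boldsymbol{a}}\boldsymbol{\mu}(\boldsymbol{a}|s)r(s,\boldsymbol{a})$; $\zeta^{\boldsymbol{\mu}}=\sum_s\pi^{\boldsymbol{\mu}}(s)\sum_{\boldsymbol{a}}\boldsymbol{\mu}(\boldsymbol{a}|s)(r(s,\boldsymbol{a})-\eta^{\boldsymbol{\mu}})^2$; for fixed $\beta\ge0$, $J(\boldsymbol{\mu})=\eta^{\boldsymbol{\mu}}-\beta\zeta^{\boldsymbol{\mu}}$. For a per-step reward $g$ (either $g=r$ with average $\eta^{\boldsymbol{\mu}}$,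 or $g=f^{\boldsymbol{\mu}}$ with $f^{\boldsymbol{\mu}}(s,\boldsymbol{a})=r(s,\boldsymbol{a})-\beta(r(s,\boldsymbol{a})-\eta^{\boldsymbol{\mu}})^2$ and average $J(\boldsymbol{\mu})$), let $\bar g$ be its stationary average, $V$ a solution of $V(s)=\sum_{\boldsymbol{a}}\boldsymbol{\mu}(\boldsymbol{a}|s)g(s,\boldsymbol{a})-\bar g+\sum_{s'}P^{\boldsymbol{\mu}}(s'|s)V(s')$ (unique up to an additive constant), $Q(s,\boldsymbol{a})=g(s,\boldsymbol{a})-\bar g+\sum_{s'}P(s'|s,\boldsymbol{a})V(s')$ and advantage $Q-V$. $A^{\boldsymbol{\mu}}$ denotes this advantage for $g=r$ (average-reward advantage) and $A_f^{\boldsymbol{\mu}}$ for $g=f^{\boldsymbol{\mu}}$. $D_{\mathrm{TV}}(\boldsymbol{\mu}',\boldsymbol{\mu})=\mathbb{E}_{s\sim\pi^{\boldsymbol{\mu}}}\big[\tfrac12\sum_{\boldsymbol{a}}|\boldsymbol{\mu}'(\boldsymbol{a}|s)-\boldsymbol{\mu}(\boldsymbol{a}|s)|\big]$. $\kappa^{\boldsymbol{\mu}}$ is Kemeny's constant of the chain $P^{\boldsymbol{\mu}}$, taken as the trace of the fundamental matrix $(I-P^{\boldsymbol{\mu}}+\boldsymbol{e}\pi^{\boldsymbol{\mu}})^{-1}$ (equivalently $\sum_{s'}\pi^{\boldsymbol{\mu}}(s')m^{\boldsymbol{\mu}}(s,s')$ with $m^{\boldsymbol{\mu}}(s,s')$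 the mean first time $t\ge1$ to reach $s'$ from $s$), and $\kappa^*=\max_{\boldsymbol{\mu}\in\mathcal{U}}\kappa^{\boldsymbol{\mu}}$. *)

(* Defs.v *)
From HB Require Import structures.
From mathcomp Require Import all_boot all_order all_algebra.
From mathcomp Require Import reals.
Set Implicit Arguments. Unset Strict Implicit. Unset Printing Implicit Defensive.
Import Order.TTheory GRing.Theory Num.Theory.
Local Open Scope ring_scope.

Section Game.
Variables (R : realType) (S : finType) (I : finType) (A : I -> finType).

Definition jact := {dffun forall i : I, A i}.

Definition policy := forall i : I, S -> A i -> R.

Definition is_policy (mu : policy) : Prop :=
  forall i s, (forall a, 0 <= mu i s a) /\ \sum_(a : A i) mu i s a = 1.

Definition jprob (mu : policy) (s : S) (a : jact) : R := \prod_(i : I) mu i s (a i).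

Definition is_kernel (P : S -> jact -> S -> R) : Prop :=
  forall s a, (forall s', 0 <= P s a s') /\ \sum_(s' : S) P s a s' = 1.

Definition Pmu (P : S -> jact -> S -> R) (mu : policy) (s s' : S) : R :=
  \sum_(a : jact) jprob mu s a * P s a s'.

Definition chain_mx (Q : S -> S -> R) : 'M[R]_#|S| :=
  \matrix_(i, j) Q (enum_val i) (enum_val j).

(* ergodic finite chain: irreducible and aperiodic, i.e. some power has all
   entries positive *)
Definition ergodic (Q : S -> S -> R) : Prop :=
  exists k : nat, forall i j, 0 < (chain_mx Q ^+ k) i j.

Definition stationary (Q : S -> S -> R) (pi : S -> R) : Prop :=
  [/\ forall s, 0 <= pi s, \sum_(s : S) pi s = 1 &
      forall s', \sum_(s : S) pi s * Q s s' = pi s'].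

(* Kemeny's constant: trace of the fundamental matrix (I - P + e pi)^-1 *)
Definition kemeny (Q : S -> S -> R) (pi : S -> R) : R :=
  \tr (invmx (1%:M - chain_mx Q + \matrix_(i, j) pi (enum_val j))).

Definition avg (pi : S -> R) (mu : policy) (g : S -> jact -> R) : R :=
  \sum_(s : S) pi s * \sum_(a : jact) jprob mu s a * g s a.

Definition etaR (pi : S -> R) (mu : policy) (r : S -> jact -> R) : R :=
  avg pi mu r.

Definition zeta (pi : S -> R) (mu : policy) (r : S -> jact -> R) : R :=
  avg pi mu (fun s a => (r s a - etaR pi mu r) ^+ 2).

Definition Jmv (beta : R) (pi : S -> R) (mu : policy) (r : S -> jact -> R) : R :=
  etaR pi mu r - beta * zeta pi mu r.

Definition fmu (beta : R) (pi : S -> R) (mu : policy) (r : S -> jact -> R)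
  (s : S) (a : jact) : R :=
  r s a - beta * (r s a - etaR pi mu r) ^+ 2.

Definition is_bias (P : S -> jact -> S -> R) (mu : policy)
  (g : S -> jact -> R) (gbar : R) (V : S -> R) : Prop :=
  forall s, V s = \sum_(a : jact) jprob mu s a * g s a - gbar
                  + \sum_(s' : S) Pmu P mu s s' * V s'.

Definition Qval (P : S -> jact -> S -> R) (g : S -> jact -> R) (gbar : R)
  (V : S -> R) (s : S) (a : jact) : R :=
  g s a - gbar + \sum_(s' : S) P s a s' * V s'.

Definition adv (P : S -> jact -> S -> R) (g : S -> jact -> R) (gbar : R)
  (V : S -> R) (s : S) (a : jact) : R :=
  Qval P g gbar V s a - V s.

Definition pexp (mu' : policy) (F : S -> jact -> R) (s : S) : R :=
  \sum_(a : jact) jprob mu' s a * F s a.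

Definition surr (pi : S -> R) (mu' : policy) (F : S -> jact -> R) : R :=
  \sum_(s : S) pi s * pexp mu' F s.

Definition epsmax (mu' : policy) (F : S -> jact -> R) : R :=
  \big[Num.max/0]_(s : S) `|pexp mu' F s|.

Definition DTV (pi : S -> R) (mu' mu : policy) : R :=
  \sum_(s : S) pi s * (2^-1 * \sum_(a : jact) `|jprob mu' s a - jprob mu s a|).

End Game.

(* Main.v *)
Require Import Defs.
From HB Require Import structures.
From mathcomp Require Import all_boot all_order all_algebra.
From mathcomp Require Import reals ring lra.
Set Implicit Arguments. Unset Strict Implicit. Unset Printing Implicit Defensive.
Import Order.TTheory GRing.Theory Num.Theory.
Local Open Scope ring_scope.
Lemma sum_prod_dep (R : realType) (I : finType) (A : I -> finType) (w : forall i, A i -> R) :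
  \sum_(a : {dffun forall i : I, A i}) \prod_i w i (a i) = \prod_i \sum_(b : A i) w i b.
Proof.
pose J := {i : I & A i}.
pose F (i : I) (j : J) := w (tag j) (tagged j).
have H1 : forall i, \sum_(b : A i) w i b = \sum_(j : J | tagged_with A i j) F i j.
  move=> i.
  have -> : \sum_(j : J | tagged_with A i j) F i j = \sum_(j in [set Tagged A b | b in [set: A i]]) F i j.
    apply: eq_bigl => j; apply/idP/idP.
      move=> Hj; have e : tag j = i by apply/eqP. apply/imsetP; exists (etagged e) => //; by rewrite etaggedK.
    by move=> /imsetP [b _ ->]; rewrite /tagged_with inE /=.
  rewrite big_imset /=; last by move=> x y _ _ H; exact: eq_from_Tagged H.
  by apply: eq_bigl => b; rewrite inE.
under eq_bigr => i _ do rewrite H1.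
rewrite bigA_distr_big_dep.
pose g (a : {dffun forall i : I, A i}) : {ffun I -> J} := [ffun i => Tagged A (a i)].
have -> : \sum_(f in family (tagged_with A)) \prod_i F i (f i) =
          \sum_(f in [set g a | a in [set: {dffun forall i : I, A i}]]) \prod_i F i (f i).
  apply: eq_bigl => f; apply/idP/idP.
    move=> /familyP Hf; apply/imsetP.
    have pf : [forall i, tag (f i) == i] by apply/forallP => i; exact: Hf.
    exists (dffun_of_fprod (FProd pf)) => //.
    apply/ffunP => i; rewrite !ffunE /=.
    rewrite /fun_of_fprod /=. by rewrite etaggedK.
  move=> /imsetP [a _ ->]; apply/familyP => i; by rewrite /g ffunE /tagged_with inE /=.
rewrite big_imset /=; last first.
  move=> x y _ _ /ffunP H; apply/ffunP => i; have := H i; rewrite !ffunE.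
  exact: eq_from_Tagged.
apply: eq_big => a; first by rewrite inE. move=> _; apply: eq_bigr => i _; by rewrite /g ffunE.
Qed.

Lemma jprob_ge0 (R : realType) (S I : finType) (A : I -> finType) (nu : policy R S A) :
  is_policy nu -> forall s a, 0 <= jprob nu s a.
Proof. by move=> h s a; apply: prodr_ge0 => i _; exact: (h i s).1. Qed.

Lemma jprob_sum1 (R : realType) (S I : finType) (A : I -> finType) (nu : policy R S A) :
  is_policy nu -> forall s, \sum_a jprob nu s a = 1.
Proof.
move=> h s; rewrite /jprob; apply: eq_trans (sum_prod_dep (fun i b => nu i s b)) _.
apply: big1 => i _; exact: (h i s).2.
Qed.

Lemma Pmu_ge0 (R : realType) (S I : finType) (A : I -> finType) P (nu : policy R S A) :
  is_kernel P -> is_policy nu -> forall s t, 0 <= Pmu P nu s t.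
Proof.
move=> hP h s t; apply: sumr_ge0 => a _; apply: mulr_ge0; first exact: jprob_ge0.
exact: (hP s a).1.
Qed.

Lemma Pmu_sum1 (R : realType) (S I : finType) (A : I -> finType) P (nu : policy R S A) :
  is_kernel P -> is_policy nu -> forall s, \sum_t Pmu P nu s t = 1.
Proof.
move=> hP h s; rewrite /Pmu exchange_big /=.
under eq_bigr do rewrite -mulr_sumr (hP s _).2 mulr1.
exact: jprob_sum1.
Qed.

Lemma avgE (R : realType) (S I : finType) (A : I -> finType) (pi : S -> R) (nu : policy R S A) F :
  avg pi nu F = \sum_s \sum_a (pi s * jprob nu s a) * F s a.
Proof. by rewrite /avg; apply: eq_bigr => s _; rewrite mulr_sumr; apply: eq_bigr => a _; rewrite mulrA. Qed.

Lemma avg_affine (R : realType) (S I : finType) (A : I -> finType) (pi : S -> R) (nu : policy R S A)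
  (F G H : S -> jact A -> R) x y z :
  \sum_s pi s = 1 -> is_policy nu ->
  (forall s a, H s a = x * F s a + y * G s a + z) ->
  avg pi nu H = x * avg pi nu F + y * avg pi nu G + z.
Proof.
move=> hpi hnu hH; rewrite !avgE.
under eq_bigr do (under eq_bigr do rewrite hH !mulrDr; rewrite !big_split /=).
rewrite !big_split /= !mulr_sumr; congr (_ + _ + _).
- by apply: eq_bigr => s _; rewrite mulr_sumr; apply: eq_bigr => a _; rewrite mulrCA.
- by apply: eq_bigr => s _; rewrite mulr_sumr; apply: eq_bigr => a _; rewrite mulrCA.
- under eq_bigr do rewrite -mulr_suml -mulr_sumr jprob_sum1 // mulr1.
  by rewrite -mulr_suml hpi mul1r.
Qed.

Lemma surr_adv (R : realType) (S I : finType) (A : I -> finType) P (nu : policy R S A) pi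
  (g : S -> jact A -> R) gbar V :
  is_policy nu -> stationary (Pmu P nu) pi ->
  surr pi nu (adv P g gbar V) = avg pi nu g - gbar.
Proof.
move=> hnu [hpi0 hpi1 hpis].
have E : forall s, pexp nu (adv P g gbar V) s =
   \sum_a jprob nu s a * g s a - gbar + \sum_t Pmu P nu s t * V t - V s.
  move=> s; rewrite /pexp /adv /Qval.
  under eq_bigr do rewrite !mulrDr mulrN.
  rewrite !big_split sumrN /= -!mulr_suml jprob_sum1 // !mul1r; congr (_ + _ - _).
  rewrite /Pmu; under eq_bigr do rewrite mulr_sumr.
  rewrite exchange_big /=; apply: eq_bigr => t _; rewrite mulr_suml.
  by apply: eq_bigr => a _; rewrite mulrA.
rewrite /surr; under eq_bigr do rewrite E !mulrDr !mulrN.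
rewrite !big_split !sumrN /= -mulr_suml hpi1 mul1r.
have -> : \sum_s pi s * \sum_t Pmu P nu s t * V t = \sum_t pi t * V t.
  under eq_bigr do rewrite mulr_sumr.
  rewrite exchange_big /=; apply: eq_bigr => t _.
  under eq_bigr do rewrite mulrA.
  by rewrite -mulr_suml hpis.
by rewrite /avg; lra.
Qed.
Lemma pow_props (R : realType) n (Qm : 'M[R]_n) (p : 'I_n -> R) :
  (forall i j, 0 <= Qm i j) -> (forall i, \sum_j Qm i j = 1) ->
  (forall j, \sum_i p i * Qm i j = p j) ->
  forall k, [/\ forall i j, 0 <= (Qm ^+ k) i j,
                forall i, \sum_j (Qm ^+ k) i j = 1 &
                forall j, \sum_i p i * (Qm ^+ k) i j = p j].
Proof.
move=> hQ0 hQ1 hps; elim=> [|k [IH0 IH1 IH2]].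
  rewrite expr0; split.
  - by move=> i j; rewrite mxE; case: (i == j).
  - move=> i; rewrite (bigD1 i) //= mxE eqxx big1 ?addr0 // => j /negbTE nj.
    by rewrite mxE eq_sym nj.
  - move=> j; rewrite (bigD1 j) //= mxE eqxx mulr1 big1 ?addr0 // => i /negbTE nj.
    by rewrite mxE nj mulr0.
have E : forall i j, (Qm ^+ k.+1) i j = \sum_l Qm i l * (Qm ^+ k) l j.
  by move=> i j; rewrite exprS -mulmxE mxE.
split.
- move=> i j; rewrite E; apply: sumr_ge0 => l _; exact: mulr_ge0.
- move=> i; under eq_bigr do rewrite E.
  rewrite exchange_big /=; under eq_bigr do rewrite -mulr_sumr IH1 mulr1.
  exact: hQ1.
- move=> j; under eq_bigr do rewrite E mulr_sumr.
  rewrite exchange_big /=.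
  under eq_bigr => l _ do (under eq_bigr do rewrite mulrA; rewrite -mulr_suml hps).
  exact: IH2.
Qed.

Lemma col_pow (R : realType) n (Qm : 'M[R]_n) (z : 'I_n -> R) :
  (forall i, z i = \sum_j Qm i j * z j) ->
  forall k i, z i = \sum_j (Qm ^+ k) i j * z j.
Proof.
move=> hz; elim=> [|k IH] i.
  rewrite expr0 (bigD1 i) //= mxE eqxx mul1r big1 ?addr0 // => j /negbTE nj.
  by rewrite mxE eq_sym nj mul0r.
have E : forall i j, (Qm ^+ k.+1) i j = \sum_l Qm i l * (Qm ^+ k) l j.
  by move=> i' j; rewrite exprS -mulmxE mxE.
under eq_bigr do rewrite E mulr_suml.
rewrite exchange_big /= hz; apply: eq_bigr => l _.
by rewrite (IH l) mulr_sumr; apply: eq_bigr => j _; rewrite mulrA.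
Qed.
Definition Mmx (R : realType) n (Qm : 'M[R]_n) (p : 'I_n -> R) : 'M[R]_n :=
  1%:M - Qm + \matrix_(i, j) p j.

Lemma Mrow_expand (R : realType) n (Qm : 'M[R]_n) p (F : 'I_n -> R) i :
  \sum_j Mmx Qm p i j * F j = F i - \sum_j Qm i j * F j + \sum_j p j * F j.
Proof.
rewrite /Mmx.
under eq_bigr do rewrite !mxE mulrDl mulrBl.
rewrite big_split sumrB /=; congr (_ - _ + _).
rewrite (bigD1 i) //= eqxx mul1r big1 ?addr0 // => j /negbTE nj.
by rewrite eq_sym nj mul0r.
Qed.

Lemma Mcol_expand (R : realType) n (Qm : 'M[R]_n) p (F : 'I_n -> R) j :
  \sum_i F i * Mmx Qm p i j = F j - \sum_i F i * Qm i j + p j * \sum_i F i.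
Proof.
rewrite /Mmx.
under eq_bigr do rewrite !mxE mulrDr mulrBr.
rewrite big_split sumrB /= mulr_sumr; congr (_ - _ + _).
  rewrite (bigD1 j) //= eqxx mulr1 big1 ?addr0 // => i /negbTE nj.
  by rewrite nj mulr0.
by apply: eq_bigr => i _; rewrite mulrC.
Qed.

Lemma argmax_ex (R : realType) n (z : 'I_n -> R) (i1 : 'I_n) : exists i0, forall i, z i <= z i0.
Proof.
case: (@arg_maxP _ _ _ i1 predT z) => // i0 _ H; exists i0 => i; exact: H.
Qed.

Lemma fund_unit (R : realType) n (Qm : 'M[R]_n) (p : 'I_n -> R) :
  (forall i j, 0 <= Qm i j) -> (forall i, \sum_j Qm i j = 1) ->
  (forall j, 0 <= p j) -> \sum_j p j = 1 ->
  (forall j, \sum_i p i * Qm i j = p j) ->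
  (exists k, forall i j, 0 < (Qm ^+ k) i j) ->
  Mmx Qm p \in unitmx.
Proof.
move=> hQ0 hQ1 hp0 hp1 hps [k hk].
have [W0 W1 W2] := pow_props hQ0 hQ1 hps k.
rewrite unitmxE unitfE; apply/negP => H0; rewrite -det_tr in H0.
case/det0P: H0 => v vn0 vM.
pose z j := v 0 j.
have hz : forall i, \sum_j Mmx Qm p i j * z j = 0.
  move=> i; have := congr1 (fun A : 'M[R]_(1,n) => A 0 i) vM; rewrite !mxE => H.
  rewrite -[RHS]H; apply: eq_bigr => j _.
  have -> : (Mmx Qm p)^T j i = Mmx Qm p i j by rewrite mxE.
  by rewrite mulrC.
pose c := \sum_j p j * z j.
have hc : c = 0.
  have : \sum_i p i * (\sum_j Mmx Qm p i j * z j) = 0.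
    by rewrite big1 // => i0 _; rewrite hz mulr0.
  under eq_bigr do rewrite Mrow_expand !mulrDr mulrN.
  rewrite big_split sumrB /= -!/c -mulr_suml hp1 mul1r.
  under [X in _ - X]eq_bigr do rewrite mulr_sumr.
  rewrite exchange_big /=.
  under [X in _ - X]eq_bigr do (under eq_bigr do rewrite mulrA; rewrite -mulr_suml hps).
  rewrite -/c; lra.
have hzQ : forall i, z i = \sum_j Qm i j * z j.
  move=> i; have := hz i; rewrite Mrow_expand -/c hc; lra.
have [i1 _] : exists i : 'I_n, true.
  case: (pickP (fun _ : 'I_n => true)) => [i1 _|none]; first by exists i1.
  by move: hp1; rewrite big_pred0 // => /esym/eqP; rewrite oner_eq0.
have [i0 hi0] := argmax_ex z i1.
have hzk := col_pow hzQ k.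
have all_eq : forall j, z j = z i0.
  have : \sum_j (Qm ^+ k) i0 j * (z i0 - z j) = 0.
    under eq_bigr do rewrite mulrBr.
    by rewrite sumrB -mulr_suml W1 mul1r -hzk subrr.
  move/psumr_eq0P => H j.
  have Hn : forall i, true -> 0 <= (Qm ^+ k) i0 i * (z i0 - z i).
    by move=> i _; apply: mulr_ge0 => //; rewrite subr_ge0.
  move: (H Hn j isT) => /eqP; rewrite mulf_eq0.
  case/orP => /eqP.
    by move=> e; have := hk i0 j; rewrite e ltxx.
  by move=> /eqP; rewrite subr_eq0 => /eqP.
have zi0 : z i0 = 0.
  by rewrite -hc /c; under eq_bigr do rewrite all_eq; rewrite -mulr_suml hp1 mul1r.
apply: (negP vn0); apply/eqP/rowP => j; rewrite mxE.
have -> : 0 = ord0 :> 'I_1 by apply: val_inj; case: (0 : 'I_1) => [[]].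
by have := all_eq j; rewrite zi0.
Qed.

Lemma fund_bound (R : realType) n (Qm : 'M[R]_n) (p : 'I_n -> R) (q : 'I_n -> R) :
  (forall i j, 0 <= Qm i j) -> (forall i, \sum_j Qm i j = 1) ->
  (forall j, 0 <= p j) -> \sum_j p j = 1 ->
  (forall j, \sum_i p i * Qm i j = p j) ->
  (exists k, forall i j, 0 < (Qm ^+ k) i j) ->
  \sum_j q j = 1 ->
  1 <= \tr (invmx (Mmx Qm p)) /\
  \sum_j `|p j - q j| <= (\tr (invmx (Mmx Qm p)) - 1) * \sum_j `|\sum_i q i * Qm i j - q j|.
Proof.
move=> hQ0 hQ1 hp0 hp1 hps herg hq1.
have Mu := fund_unit hQ0 hQ1 hp0 hp1 hps herg.
set Mm := Mmx Qm p; set Z := invmx Mm.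
have MZ : forall i j, \sum_k Mm i k * Z k j = (i == j)%:R.
  move=> i j; have := congr1 (fun A : 'M[R]_n => A i j) (mulmxV Mu).
  by rewrite !mxE.
have ZM : forall i j, \sum_k Z i k * Mm k j = (i == j)%:R.
  move=> i j; have := congr1 (fun A : 'M[R]_n => A i j) (mulVmx Mu).
  by rewrite !mxE.
have [k hk] := herg.
have [W0 W1 W2] := pow_props hQ0 hQ1 hps k.
have [i2 hi2] : exists i, 0 < p i.
  case: (pickP (fun i => 0 < p i)) => [i2 h|none]; first by exists i2.
  have : \sum_j p j = 0.
    rewrite big1 // => i _.
    by apply/eqP; rewrite eq_le hp0 andbT leNgt none.
  by rewrite hp1 => /eqP; rewrite oner_eq0.
have ppos : forall j, 0 < p j.
  move=> j; rewrite -W2 (bigD1 i2) //=.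
  have : 0 <= \sum_(i | i != i2) p i * (Qm ^+ k) i j.
    by apply: sumr_ge0 => i _; apply: mulr_ge0.
  have := mulr_gt0 hi2 (hk i2 j); lra.
have pZ : forall j, \sum_k p k * Z k j = p j.
  move=> j; have : \sum_i p i * (\sum_k Mm i k * Z k j) = \sum_i p i * (i == j)%:R.
    by apply: eq_bigr => i _; rewrite MZ.
  have -> : \sum_i p i * (i == j)%:R = p j.
    rewrite (bigD1 j) //= eqxx mulr1 big1 ?addr0 //.
    by move=> i /negbTE ->; rewrite mulr0.
  under eq_bigr do rewrite Mrow_expand !mulrDr mulrN.
  rewrite big_split sumrB /= -mulr_suml hp1 mul1r.
  under [X in _ - X]eq_bigr do rewrite mulr_sumr.
  rewrite exchange_big /=.
  under [X in _ - X]eq_bigr do (under eq_bigr do rewrite mulrA; rewrite -mulr_suml hps).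
  lra.
have Zeq : forall i j, Z i j = \sum_k Qm i k * Z k j + (i == j)%:R - p j.
  move=> i j; have := MZ i j; rewrite Mrow_expand pZ; lra.
have Zrow : forall i, \sum_j Z i j = 1.
  move=> i; have : \sum_j \sum_k Z i k * Mm k j = \sum_j (i == j)%:R.
    by apply: eq_bigr => j _; rewrite ZM.
  have -> : \sum_j (i == j)%:R = 1 :> R.
    rewrite (bigD1 i) //= eqxx big1 ?addr0 //.
    by move=> j; rewrite eq_sym => /negbTE ->.
  rewrite exchange_big /=; under eq_bigr do rewrite -mulr_sumr.
  have Mrow1 : forall k, \sum_j Mm k j = 1.
    move=> k0; have := Mrow_expand Qm p (fun=> 1) k0.
    under eq_bigr do rewrite mulr1.
    under [in RHS]eq_bigr do rewrite mulr1.
    under [X in _ = _ - _ + X]eq_bigr do rewrite mulr1.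
    by rewrite hQ1 hp1 => ->; lra.
  by under eq_bigr do rewrite Mrow1 mulr1.
have Zdom : forall i j, Z i j <= Z j j.
  move=> i j.
  have [i0 hi0] := argmax_ex (fun i => Z i j) i.
  case: (eqVneq i0 j) => [e|nij]; first by have := hi0 i; rewrite e.
  exfalso; have := Zeq i0 j; rewrite (negbTE nij) /= mulr0n addr0.
  have : \sum_k Qm i0 k * Z k j <= \sum_k Qm i0 k * Z i0 j.
    by apply: ler_sum => k0 _; apply: ler_wpM2l.
  rewrite -mulr_suml hQ1 mul1r.
  have := ppos j; lra.
have trZ : forall i, \tr Z - 1 = \sum_j (Z j j - Z i j).
  by move=> i; rewrite sumrB Zrow.
split.
  have := trZ i2; have : 0 <= \sum_j (Z j j - Z i2 j).
    by apply: sumr_ge0 => j _; rewrite subr_ge0.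
  lra.
pose x j := \sum_i q i * Qm i j - q j.
have x0 : \sum_j x j = 0.
  rewrite /x sumrB exchange_big /=.
  under eq_bigr do rewrite -mulr_sumr hQ1 mulr1.
  by rewrite subrr.
have yx : forall j, p j - q j = \sum_i x i * Z i j.
  move=> j.
  have xM : forall i, x i = \sum_l (p l - q l) * Mm l i.
    move=> i; rewrite Mcol_expand.
    under eq_bigr do rewrite mulrBl.
    rewrite sumrB hps sumrB hp1 hq1 subrr mulr0 addr0 /x; lra.
  under eq_bigr do rewrite xM mulr_suml.
  rewrite exchange_big /=.
  under eq_bigr do (under eq_bigr do rewrite -mulrA; rewrite -mulr_sumr MZ).
  rewrite (bigD1 j) //= eqxx mulr1 big1 ?addr0 //.
  by move=> i /negbTE; rewrite eq_sym => ->; rewrite mulr0.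
have yb : forall j, `|p j - q j| <= \sum_i `|x i| * (Z j j - Z i j).
  move=> j; rewrite yx.
  have -> : \sum_i x i * Z i j = - \sum_i x i * (Z j j - Z i j).
    under [in RHS]eq_bigr do rewrite mulrBr.
    by rewrite sumrB -mulr_suml x0 mul0r sub0r opprK.
  rewrite normrN; apply: le_trans (ler_norm_sum _ _ _) _.
  apply: ler_sum => i _; rewrite normrM; apply: ler_wpM2l => //.
  by rewrite ger0_norm // subr_ge0.
apply: le_trans (ler_sum _ (fun j _ => yb j)) _.
rewrite exchange_big /= mulr_sumr; apply: ler_sum => i _.
rewrite -mulr_sumr (trZ i) mulrC //.
Qed.
Lemma sum_ev (R : realType) (S : finType) (F : S -> R) :
  \sum_(j < #|S|) F (enum_val j) = \sum_(s : S) F s.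
Proof. by rewrite (big_enum_val F). Qed.

Lemma max_seq_ge (R : realType) (T : eqType) (F : T -> R) (r : seq T) x :
  x \in r -> F x <= \big[Num.max/0]_(i <- r) F i.
Proof.
elim: r => [//|a r IH]; rewrite inE big_cons => /orP [/eqP ->|xr].
  by rewrite le_max lexx.
by rewrite le_max IH // orbT.
Qed.

Lemma max_seq_ge0 (R : realType) (T : eqType) (F : T -> R) (r : seq T) :
  0 <= \big[Num.max/0]_(i <- r) F i.
Proof. by elim: r => [|a r IH]; rewrite ?big_nil // big_cons le_max IH orbT. Qed.

Lemma eps_ge (R : realType) (S I : finType) (A : I -> finType) (mu' : policy R S A) F s :
  `|pexp mu' F s| <= epsmax mu' F.
Proof. by apply: (max_seq_ge (fun s => `|pexp mu' F s|)); rewrite mem_index_enum. Qed.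

Lemma eps_ge0 (R : realType) (S I : finType) (A : I -> finType) (mu' : policy R S A) F :
  0 <= epsmax mu' F.
Proof. exact: max_seq_ge0. Qed.

Lemma N_bound (R : realType) (S I : finType) (A : I -> finType) P (mu mu' : policy R S A) pi :
  is_kernel P -> is_policy mu -> is_policy mu' -> stationary (Pmu P mu) pi ->
  \sum_t `|\sum_s pi s * Pmu P mu' s t - pi t| <= 2 * DTV pi mu' mu.
Proof.
move=> hP hmu hmu' [pi0 pi1 pis].
have e : forall t, \sum_s pi s * Pmu P mu' s t - pi t =
    \sum_s pi s * \sum_a (jprob mu' s a - jprob mu s a) * P s a t.
  move=> t; rewrite -{1}(pis t) -sumrB; apply: eq_bigr => s _.
  rewrite -mulrBr /Pmu -sumrB; congr (_ * _); apply: eq_bigr => a _.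
  by rewrite mulrBl.
have b : forall t, `|\sum_s pi s * Pmu P mu' s t - pi t| <=
    \sum_s pi s * \sum_a `|jprob mu' s a - jprob mu s a| * P s a t.
  move=> t; rewrite e; apply: le_trans (ler_norm_sum _ _ _) _.
  apply: ler_sum => s _; rewrite normrM ger0_norm //; apply: ler_wpM2l => //.
  apply: le_trans (ler_norm_sum _ _ _) _; apply: ler_sum => a _.
  by rewrite normrM (ger0_norm ((hP s a).1 t)).
apply: le_trans (ler_sum _ (fun t _ => b t)) _.
rewrite exchange_big /= /DTV mulr_sumr; apply: ler_sum => s _.
have h2 : forall x : R, 2 * (2^-1 * x) = x.
  by move=> x; rewrite mulrA mulfV ?mul1r // pnatr_eq0.
rewrite -mulr_sumr mulrCA h2.
apply: ler_wpM2l => //.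
rewrite exchange_big /=; apply: ler_sum => a _.
by rewrite -mulr_sumr (hP s a).2 mulr1.
Qed.

Lemma gap (R : realType) (S : finType) (pi pi' g : S -> R) eps :
  (forall s, `|g s| <= eps) ->
  `|\sum_s pi' s * g s - \sum_s pi s * g s| <= eps * \sum_s `|pi' s - pi s|.
Proof.
move=> hg; rewrite -sumrB; apply: le_trans (ler_norm_sum _ _ _) _.
rewrite mulr_sumr; apply: ler_sum => s _.
rewrite -mulrBl normrM [eps * _]mulrC; apply: ler_wpM2l => //.
Qed.

Lemma sq_diff (R : realType) (S I : finType) (A : I -> finType) (pi : S -> R) (nu : policy R S A)
  (r : S -> jact A -> R) c :
  \sum_s pi s = 1 -> is_policy nu ->
  avg pi nu (fun s a => (r s a - c) ^+ 2) =
  avg pi nu (fun s a => r s a ^+ 2) - 2 * c * avg pi nu r + c ^+ 2.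
Proof.
move=> h1 h2.
rewrite (@avg_affine _ _ _ _ pi nu (fun s a => r s a ^+ 2) r _ 1 (- (2 * c)) (c ^+ 2)) //.
  by ring.
by move=> s a; ring.
Qed.

Unset Implicit Arguments.
Set Strict Implicit.

Theorem theorem6 (R : realType) (S I : finType) (A : I -> finType)
  (P : S -> jact A -> S -> R) (r : S -> jact A -> R) (beta : R)
  (hbeta : 0 <= beta) (hP : is_kernel P)
  (herg : forall nu : policy R S A, is_policy nu -> ergodic (Pmu P nu))
  (kstar : R)
  (hkmax : forall (nu : policy R S A) (pinu : S -> R), is_policy nu ->
            stationary (Pmu P nu) pinu -> kemeny (Pmu P nu) pinu <= kstar)
  (hkatt : exists (nu : policy R S A) (pinu : S -> R),
            [/\ is_policy nu, stationary (Pmu P nu) pinu &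
                kemeny (Pmu P nu) pinu = kstar])
  (mu mu' : policy R S A) (hmu : is_policy mu) (hmu' : is_policy mu')
  (pi pi' : S -> R) (hpi : stationary (Pmu P mu) pi)
  (hpi' : stationary (Pmu P mu') pi')
  (V Vf : S -> R)
  (hV : is_bias P mu r (etaR pi mu r) V)
  (hVf : is_bias P mu (fmu beta pi mu r) (Jmv beta pi mu r) Vf) :
  let Aeta := adv P r (etaR pi mu r) V in
  let Af := adv P (fmu beta pi mu r) (Jmv beta pi mu r) Vf in
  let Lf := surr pi mu' Af in
  let L := surr pi mu' Aeta in
  let eps_f := epsmax mu' Af in
  let eps_eta := epsmax mu' Aeta in
  let D := DTV pi mu' mu in
  let H := Num.max 0 (Num.max (L - 2 * (kstar - 1) * eps_eta * D)
                              (- L - 2 * (kstar - 1) * eps_eta * D)) in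
  Jmv beta pi' mu' r - Jmv beta pi mu r >=
    Lf - 2 * (kstar - 1) * eps_f * D + beta * H ^+ 2.
Proof.
cbv zeta.
set Aeta := adv P r (etaR pi mu r) V.
set Af := adv P (fmu beta pi mu r) (Jmv beta pi mu r) Vf.
set Lf := surr pi mu' Af.
set L := surr pi mu' Aeta.
set eps_f := epsmax mu' Af.
set eps_eta := epsmax mu' Aeta.
set D := DTV pi mu' mu.
set H := Num.max 0 (Num.max (L - 2 * (kstar - 1) * eps_eta * D)
                              (- L - 2 * (kstar - 1) * eps_eta * D)).
have hpi_ := hpi; have hpi'_ := hpi'.
case: hpi => [pi0 pi1 pis]; case: hpi' => [pi'0 pi'1 pi's].
have c1 : forall i j, 0 <= chain_mx (Pmu P mu') i j.
  by move=> i j; rewrite mxE; apply: Pmu_ge0.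
have c2 : forall i, \sum_j chain_mx (Pmu P mu') i j = 1.
  move=> i; under eq_bigr do rewrite mxE.
  by rewrite (sum_ev (fun t => Pmu P mu' (enum_val i) t)) Pmu_sum1.
have c3 : forall j, 0 <= pi' (@enum_val S (mem S) j) by move=> j.
have c4 : \sum_j pi' (@enum_val S (mem S) j) = 1 by rewrite (sum_ev pi').
have c5 : forall j, \sum_i pi' (@enum_val S (mem S) i) * chain_mx (Pmu P mu') i j = pi' (enum_val j).
  move=> j; under eq_bigr do rewrite mxE.
  by rewrite (sum_ev (fun s => pi' s * Pmu P mu' s (enum_val j))) pi's.
have c6 := herg mu' hmu'.
have c7 : \sum_j pi (@enum_val S (mem S) j) = 1 by rewrite (sum_ev pi).
have [k1 kb] := fund_bound c1 c2 c3 c4 c5 c6 c7.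
have Kdef : \tr (invmx (Mmx (chain_mx (Pmu P mu')) (fun j => pi' (enum_val j)))) =
            kemeny (Pmu P mu') pi' by [].
rewrite Kdef in k1 kb.
rewrite (sum_ev (fun s => `|pi' s - pi s|)) in kb.
have Ndef : \sum_j `|\sum_i pi (enum_val i) * chain_mx (Pmu P mu') i j - pi (enum_val j)| =
            \sum_t `|\sum_s pi s * Pmu P mu' s t - pi t|.
  rewrite -(sum_ev (fun t => `|\sum_s pi s * Pmu P mu' s t - pi t|)).
  apply: eq_bigr => j _; congr (`|_ - _|).
  rewrite -(sum_ev (fun s => pi s * Pmu P mu' s (enum_val j))).
  by apply: eq_bigr => i _; rewrite mxE.
rewrite Ndef in kb.
have Nb := N_bound hP hmu hmu' hpi_.
have kk := hkmax mu' pi' hmu' hpi'_.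
set Dl := \sum_s `|pi' s - pi s|.
set N := \sum_t `|\sum_s pi s * Pmu P mu' s t - pi t|.
have N0 : 0 <= N by apply: sumr_ge0 => t _.
have D0 : 0 <= D.
  rewrite /D /DTV; apply: sumr_ge0 => s _; apply: mulr_ge0 => //; apply: mulr_ge0.
    by rewrite invr_ge0 ler0n.
  by apply: sumr_ge0.
have Dlb : Dl <= 2 * (kstar - 1) * D.
  apply: le_trans kb _.
  have a1 : (kemeny (Pmu P mu') pi' - 1) * N <= (kemeny (Pmu P mu') pi' - 1) * (2 * D).
    by apply: ler_wpM2l => //; lra.
  have a2 : (kemeny (Pmu P mu') pi' - 1) * (2 * D) <= (kstar - 1) * (2 * D).
    by apply: ler_wpM2r; [lra | lra].
  have -> : 2 * (kstar - 1) * D = (kstar - 1) * (2 * D) by ring.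
  exact: le_trans a1 a2.
have gap_bound : forall F, `|surr pi' mu' F - surr pi mu' F| <= 2 * (kstar - 1) * epsmax mu' F * D.
  move=> F; apply: le_trans (gap pi pi' (fun s => eps_ge mu' F s)) _.
  have := eps_ge0 mu' F => e0.
  have -> : 2 * (kstar - 1) * epsmax mu' F * D = epsmax mu' F * (2 * (kstar - 1) * D) by ring.
  by apply: ler_wpM2l.
have sA := surr_adv r (etaR pi mu r) V hmu' hpi'_.
have sAf := surr_adv (fmu beta pi mu r) (Jmv beta pi mu r) Vf hmu' hpi'_.
set d := surr pi' mu' Aeta.
have dE : d = etaR pi' mu' r - etaR pi mu r by rewrite /d /Aeta sA.
have fE : avg pi' mu' (fmu beta pi mu r) =
          etaR pi' mu' r - beta * avg pi' mu' (fun s a => (r s a - etaR pi mu r) ^+ 2).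
  rewrite (@avg_affine _ _ _ _ pi' mu' r (fun s a => (r s a - etaR pi mu r) ^+ 2) _ 1 (- beta) 0) //.
    rewrite /etaR; ring.
  by move=> s a; rewrite /fmu; ring.
have Jd : Jmv beta pi' mu' r - Jmv beta pi mu r = surr pi' mu' Af + beta * d ^+ 2.
  rewrite /Af sAf fE dE /Jmv /zeta !sq_diff //.
  rewrite /etaR; ring.
have g1 := gap_bound Af; have g2 := gap_bound Aeta.
rewrite -/Lf -/eps_f -/L -/eps_eta -/d in g1 g2.
have H0 : 0 <= H by rewrite /H le_max lexx.
have Hd : H <= `|d|.
  rewrite /H !ge_max normr_ge0 /=.
  have h2 := ler_norm d.
  have h1 : - d <= `|d| by rewrite -normrN ler_norm.
  move: g2; rewrite ler_norml => /andP [g2a g2b].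
  apply/andP; split; lra.
have Hsq : H ^+ 2 <= d ^+ 2.
  rewrite -(real_normK (num_real d)) !expr2; exact: ler_pM.
have : beta * H ^+ 2 <= beta * d ^+ 2 by apply: ler_wpM2l.
move: g1; rewrite ler_norml => /andP [g1a g1b].
rewrite Jd; lra.
Qed.
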